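(* Let $L$ be an ultraparacompact locale with $\bot\neq\top$, $B$ its Boolean algebra of complemented opens, $\mathcal{J}$ the set of partitions of $L$, and $F$ a $B_{\mathcal{J}}$-set. For each $x\in|F|$ the function $\hat x:=\lambda y.\bigvee\{b\in B: x\equiv_b y\}$ is an open of the étale space $E(F)$, and the assignment $x\mapsto\hat x$ is injective. Moreover every $w\in\mathcal{O}(E(F))$ satisfies $w=\bigvee_{x\in|F|}\hat x\wedge\mathrm{const}_{w(x)}$.
   Context: Partitions of $L$: pairwise disjoint sets of opens, not containing $\bot$, with join $\top$ (their members are complemented). $L$ ultraparacompact: every open is a join of complemented opens, and every cover is refined by a partition. A $B_{\mathcal{J}}$-set $F$ is a set $|F|$ with binary operations $b(-,-)$ ($b\in B$) satisfying $b(x,x)=x$, $b(b(x,y),z)=b(x,z)$, $b(x,b(y,z))=b(x,z)$, $\top(x,y)=x$, $(\neg b)(x,y)=b(y,x)$, $(b\wedge c)(x,y)=b(c(x,y),y)$, and $P$-ary operations $P(-)$ for $P\in\mathcal{J}$ satisfying $P(\lambda b.z)=z$, $P(\lambda b.b(x_b,y_b))=P(\lambda b.x_b)$, $b(P(x),x_b)=x_b$ ($b\in P$). For $b\in B$, $x\equiv_by$ iff $b(x,y)=y$. $\mathcal{O}(L)$ is a $B_{\mathcal{J}}$-set via $b(u,v)=(b\wedge u)\vee(\neg b\wedge v)$, $P(\lambda b.u_b)=\bigvee_{b\in P}(b\wedge u_b)$. The étale space $E(F)$ is the locale whose frame $\mathcal{O}(E(F))$ is the set of $B_{\mathcal{J}}$-set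 homomorphisms $F\to\mathcal{O}(L)$, ordered pointwise (meets and joins computed pointwise); $\mathrm{const}_u$ denotes the constant function with value $u$. *)

(* Defs.v *)
Set Implicit Arguments.

Record Frame := {
  car :> Type;
  le : car -> car -> Prop;
  join : (car -> Prop) -> car;
  meet : car -> car -> car;
  top : car;
  bot : car;
  le_refl : forall u, le u u;
  le_trans : forall u v w, le u v -> le v w -> le u w;
  le_antisym : forall u v, le u v -> le v u -> u = v;
  join_ub : forall (S : car -> Prop) s, S s -> le s (join S);
  join_least : forall (S : car -> Prop) u, (forall s, S s -> le s u) -> le (join S) u;
  meet_lb1 : forall u v, le (meet u v) u;
  meet_lb2 : forall u v, le (meet u v) v;
  meet_glb : forall u v w, le w u -> le w v -> le w (meet u v);
  top_max : forall u, le u top;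
  bot_min : forall u, le bot u;
  meet_join_distr : forall u (S : car -> Prop),
    meet u (join S) = join (fun w => exists s, S s /\ w = meet u s)
}.

Arguments le {L} : rename.
Arguments join {L} : rename.
Arguments meet {L} : rename.
Arguments top {L} : rename.
Arguments bot {L} : rename.

Definition join2 {L : Frame} (u v : L) : L := join (fun w => w = u \/ w = v).

Definition complemented {L : Frame} (u : L) : Prop :=
  exists v, meet u v = bot /\ join2 u v = top.

(* the (pseudo)complement; for complemented u it is the complement of u *)
Definition compl {L : Frame} (u : L) : L := join (fun v => meet u v = bot).

Definition B (L : Frame) := { u : L | complemented u }.

Definition partition {L : Frame} (P : B L -> Prop) : Prop :=
  (forall b c, P b -> P c -> b <> c -> meet (proj1_sig b) (proj1_sig c) = bot) /\
  (forall b, P b -> proj1_sig b <> bot) /\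
  join (fun u => exists b, P b /\ proj1_sig b = u) = top.

Definition ultraparacompact (L : Frame) : Prop :=
  (forall u : L, exists S : L -> Prop,
      (forall s, S s -> complemented s) /\ u = join S) /\
  (forall C : L -> Prop, join C = top ->
      exists P : B L -> Prop, partition P /\
        forall b, P b -> exists c, C c /\ le (proj1_sig b) c).

Record BJset (L : Frame) := {
  bcar :> Type;
  bop : B L -> bcar -> bcar -> bcar;
  pop : forall P : B L -> Prop, ({ b | P b } -> bcar) -> bcar; (* P(-), meaningful for P in J *)
  bop_idem : forall b x, bop b x x = x;
  bop_left : forall b x y z, bop b (bop b x y) z = bop b x z;
  bop_right : forall b x y z, bop b x (bop b y z) = bop b x z;
  bop_top : forall (t : B L) x y, proj1_sig t = top -> bop t x y = x;
  bop_neg : forall (b c : B L) x y,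
      proj1_sig c = compl (proj1_sig b) -> bop c x y = bop b y x;
  bop_meet : forall (b c d : B L) x y,
      proj1_sig d = meet (proj1_sig b) (proj1_sig c) ->
      bop d x y = bop b (bop c x y) y;
  pop_const : forall P, partition P -> forall z, pop P (fun _ => z) = z;
  pop_bop : forall P, partition P -> forall xs ys : { b | P b } -> bcar,
      pop P (fun i => bop (proj1_sig i) (xs i) (ys i)) = pop P xs;
  pop_proj : forall P, partition P -> forall (xs : { b | P b } -> bcar) i,
      bop (proj1_sig i) (pop P xs) (xs i) = xs i
}.

Arguments bop {L} F : rename.
Arguments pop {L} F : rename.

Definition equivb {L : Frame} (F : BJset L) (b : B L) (x y : F) : Prop :=
  bop F b x y = y.

(* B_J-set homomorphisms F -> O(L), O(L) with
   b(u,v) = (b /\ u) \/ (~b /\ v),  P(lambda b. u_b) = \/_{b in P} (b /\ u_b).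
   These are the opens of the etale space E(F). *)
Definition is_open_E {L : Frame} (F : BJset L) (h : F -> L) : Prop :=
  (forall b x y, h (bop F b x y) =
     join2 (meet (proj1_sig b) (h x)) (meet (compl (proj1_sig b)) (h y))) /\
  (forall P, partition P -> forall xs : { b | P b } -> F,
     h (pop F P xs) =
     join (fun u => exists i : { b | P b }, u = meet (proj1_sig (proj1_sig i)) (h (xs i)))).

Definition xhat {L : Frame} (F : BJset L) (x : F) : F -> L :=
  fun y => join (fun u => exists b : B L, proj1_sig b = u /\ equivb F b x y).

(* Main.v *)
Require Import Defs.
From Stdlib Require Import FunctionalExtensionality Setoid.

Section Fr.
Variable L : Frame.
Implicit Types u v w : L.

Lemma meet_comm u v : meet u v = meet v u.
Proof. apply le_antisym; apply meet_glb; (apply meet_lb1 || apply meet_lb2). Qed.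

Lemma meet_of_le u v : le u v -> meet u v = u.
Proof. intro H. apply le_antisym. apply meet_lb1. apply meet_glb; [apply le_refl|exact H]. Qed.

Lemma meet_top u : meet u top = u.
Proof. apply meet_of_le, top_max. Qed.

Lemma j2_ub1 u v : le u (join2 u v).
Proof. apply join_ub. auto. Qed.
Lemma j2_ub2 u v : le v (join2 u v).
Proof. apply join_ub. auto. Qed.
Lemma j2_least u v w : le u w -> le v w -> le (join2 u v) w.
Proof. intros. apply join_least. intros s [->| ->]; auto. Qed.

Lemma j2_comm u v : join2 u v = join2 v u.
Proof. apply le_antisym; apply j2_least; (apply j2_ub1 || apply j2_ub2). Qed.

Lemma distr2 u v w : meet u (join2 v w) = join2 (meet u v) (meet u w).
Proof.
  unfold join2 at 1. rewrite meet_join_distr. apply le_antisym.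
  - apply join_least. intros s [t [[->| ->] ->]]; [apply j2_ub1|apply j2_ub2].
  - apply j2_least; apply join_ub; eauto.
Qed.

Lemma le_bot u : le u bot -> u = bot.
Proof. intro; apply le_antisym; auto using bot_min. Qed.

Lemma compl_meet u : meet u (compl u) = bot.
Proof.
  unfold compl. rewrite meet_join_distr. apply le_bot, join_least.
  intros s [t [Ht ->]]. rewrite Ht. apply le_refl.
Qed.

Lemma compl_join u : complemented u -> join2 u (compl u) = top.
Proof.
  intros [v [H1 H2]]. apply le_antisym; [apply top_max|].
  rewrite <- H2. apply j2_least; [apply j2_ub1|].
  eapply le_trans; [|apply j2_ub2]. apply join_ub. exact H1.
Qed.

Lemma compl_compl u : complemented u -> complemented (compl u).
Proof.
  intro H. exists u. split. rewrite meet_comm. apply compl_meet.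
  rewrite j2_comm. apply compl_join; exact H.
Qed.

Lemma meet_compl u v : complemented u -> complemented v -> complemented (meet u v).
Proof.
  intros Hu Hv. exists (join2 (compl u) (compl v)). split.
  - rewrite distr2. apply le_bot, j2_least.
    + rewrite <- (compl_meet u). apply meet_glb.
      eapply le_trans; apply meet_lb1. apply meet_lb2.
    + rewrite <- (compl_meet v). apply meet_glb.
      eapply le_trans; [apply meet_lb1|apply meet_lb2]. apply meet_lb2.
  - apply le_antisym; [apply top_max|].
    assert (Hv' : le v (join2 (meet u v) (join2 (compl u) (compl v)))).
    { apply le_trans with (meet v (join2 u (compl u))).
      { apply meet_glb; [apply le_refl|]. rewrite (compl_join _ Hu). apply top_max. }
      rewrite distr2. apply j2_least.
      - rewrite meet_comm. apply j2_ub1.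
      - eapply le_trans; [apply meet_lb2|]. eapply le_trans; [|apply j2_ub2]. apply j2_ub1. }
    rewrite <- (compl_join _ Hv). apply j2_least; auto.
    eapply le_trans; [|apply j2_ub2]. apply j2_ub2.
Qed.

Lemma top_compl : complemented (top : L).
Proof.
  exists bot. split. apply le_bot, meet_lb2. apply le_antisym; [apply top_max|apply j2_ub1].
Qed.
End Fr.

Section G.
Variable L : Frame.
Variable F : BJset L.

Definition btop : B L := exist _ top (top_compl L).
Definition bneg (b : B L) : B L := exist _ (compl (proj1_sig b)) (compl_compl _ _ (proj2_sig b)).
Definition bmeet (b c : B L) : B L :=
  exist _ (meet (proj1_sig b) (proj1_sig c)) (meet_compl _ _ _ (proj2_sig b) (proj2_sig c)).

Lemma bop_val (b1 b2 : B L) (x y : F) : proj1_sig b1 = proj1_sig b2 -> bop F b1 x y = bop F b2 x y.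
Proof.
  intro H. rewrite (bop_meet F b2 b2 b1 x y). now rewrite bop_left.
  rewrite H. symmetry. apply meet_of_le, le_refl.
Qed.

Lemma eqb_refl b (x : F) : equivb F b x x.
Proof. apply bop_idem. Qed.
Lemma eqb_sym b (x y : F) : equivb F b x y -> equivb F b y x.
Proof. unfold equivb. intro H. rewrite <- H at 1. rewrite bop_left. apply bop_idem. Qed.
Lemma eqb_trans b (x y z : F) : equivb F b x y -> equivb F b y z -> equivb F b x z.
Proof. unfold equivb. intros H1 H2. rewrite <- H2 at 2. rewrite <- H1. rewrite bop_left. reflexivity. Qed.
Lemma eqb_down (b c : B L) (x y : F) : le (proj1_sig c) (proj1_sig b) -> equivb F b x y -> equivb F c x y.
Proof.
  unfold equivb. intros Hl H. rewrite (bop_meet F c b c x y). now rewrite H, bop_idem.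
  symmetry. apply meet_of_le, Hl.
Qed.
Lemma eqb_bop_l b (x y : F) : equivb F b (bop F b x y) x.
Proof. unfold equivb. rewrite bop_left. apply bop_idem. Qed.
Lemma eqb_bop_r b (x y : F) : equivb F (bneg b) (bop F b x y) y.
Proof. unfold equivb. rewrite (bop_neg F b (bneg b)) by reflexivity. rewrite bop_right. apply bop_idem. Qed.

Lemma xhat_le b (x y : F) : equivb F b x y -> le (proj1_sig b) (xhat F x y).
Proof. intro H. apply join_ub. eauto. Qed.
Lemma xhat_least (x y : F) u : (forall b, equivb F b x y -> le (proj1_sig b) u) -> le (xhat F x y) u.
Proof. intro H. apply join_least. intros s [b [<- Hb]]. auto. Qed.
Lemma xhat_self (x : F) : xhat F x x = top.
Proof. apply le_antisym. apply top_max. apply (xhat_le btop). apply eqb_refl. Qed.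
Lemma meet_xhat_le (x y : F) u v :
  (forall c, equivb F c x y -> le (meet (proj1_sig c) u) v) -> le (meet (xhat F x y) u) v.
Proof.
  intro H. rewrite meet_comm. unfold xhat. rewrite meet_join_distr.
  apply join_least. intros s [t [[b [<- Hb]] ->]]. rewrite meet_comm. auto.
Qed.

Lemma le_meet_r (u v w : L) : le v w -> le (meet u v) w.
Proof. intro; eapply le_trans; [apply meet_lb2|]; auto. Qed.
Lemma le_meet_l (u v w : L) : le u w -> le (meet u v) w.
Proof. intro; eapply le_trans; [apply meet_lb1|]; auto. Qed.

Lemma xhat_open (x : F) : is_open_E F (xhat F x).
Proof.
  split.
  - intros b y z. apply le_antisym.
    + apply xhat_least. intros c Hc.
      apply le_trans with (meet (proj1_sig c) (join2 (proj1_sig b) (compl (proj1_sig b)))).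
      { apply meet_glb; [apply le_refl|]. rewrite compl_join. apply top_max. apply proj2_sig. }
      rewrite distr2. apply j2_least.
      * eapply le_trans; [|apply j2_ub1]. apply meet_glb. apply meet_lb2.
        apply (xhat_le (bmeet c b)). apply eqb_trans with (bop F b y z).
        apply (eqb_down c). apply meet_lb1. exact Hc.
        apply (eqb_down b). apply meet_lb2. apply eqb_bop_l.
      * eapply le_trans; [|apply j2_ub2]. apply meet_glb. apply meet_lb2.
        apply (xhat_le (bmeet c (bneg b))). apply eqb_trans with (bop F b y z).
        apply (eqb_down c). apply meet_lb1. exact Hc.
        apply (eqb_down (bneg b)). apply meet_lb2. apply eqb_bop_r.
    + apply j2_least; rewrite meet_comm; apply meet_xhat_le; intros c Hc.
      * rewrite meet_comm. apply (xhat_le (bmeet b c)). apply eqb_trans with y.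
        apply (eqb_down c). apply meet_lb2. exact Hc.
        apply (eqb_down b). apply meet_lb1. apply eqb_sym, eqb_bop_l.
      * rewrite meet_comm. apply (xhat_le (bmeet (bneg b) c)). apply eqb_trans with z.
        apply (eqb_down c). apply meet_lb2. exact Hc.
        apply (eqb_down (bneg b)). apply meet_lb1. apply eqb_sym, eqb_bop_r.
  - intros P HP xs. pose proof (pop_proj F HP xs) as Hp. apply le_antisym.
    + apply xhat_least. intros c Hc.
      apply le_trans with (meet (proj1_sig c) (join (fun u => exists b, P b /\ proj1_sig b = u))).
      { apply meet_glb; [apply le_refl|]. destruct HP as [_ [_ ->]]. apply top_max. }
      rewrite meet_join_distr. apply join_least. intros s [t [[b [Pb <-]] ->]].
      assert (Hm : le (meet (proj1_sig c) (proj1_sig b)) (xhat F x (xs (exist _ b Pb)))).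
      { apply (xhat_le (bmeet c b)). apply eqb_trans with (pop F P xs).
        apply (eqb_down c). apply meet_lb1. exact Hc.
        apply (eqb_down b). apply meet_lb2. apply (Hp (exist _ b Pb)). }
      apply le_trans with (meet (proj1_sig b) (xhat F x (xs (exist _ b Pb)))).
      { apply meet_glb; [apply meet_lb2|exact Hm]. }
      apply join_ub. exists (exist _ b Pb). reflexivity.
    + apply join_least. intros s [i ->]. rewrite meet_comm. apply meet_xhat_le. intros c Hc.
      rewrite meet_comm. apply (xhat_le (bmeet (proj1_sig i) c)). apply eqb_trans with (xs i).
      apply (eqb_down c). apply meet_lb2. exact Hc.
      apply (eqb_down (proj1_sig i)). apply meet_lb1. apply eqb_sym, Hp.
Qed.
End G.

Theorem lemma2p18 (L : Frame) (F : BJset L) :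
  ultraparacompact L -> (bot : L) <> top ->
  (forall x : F, is_open_E F (xhat F x)) /\
  (forall x x' : F, xhat F x = xhat F x' -> x = x') /\
  (forall w : F -> L, is_open_E F w ->
     forall y : F, w y = join (fun u => exists x : F, u = meet (xhat F x y) (w x))).
Proof.
  intros [_ Hup] _. split; [|split].
  - apply xhat_open.
  - intros x x' Hx.
    assert (Ht : xhat F x' x = top) by (rewrite <- Hx; apply xhat_self).
    destruct (Hup _ Ht) as [P [HP Href]].
    assert (Hall : forall i : {b | P b}, bop F (proj1_sig i) x' x = x).
    { intros [b Pb]. simpl. destruct (Href b Pb) as [c [[b' [<- Hb']] Hle]].
      exact (eqb_down _ _ b' b x' x Hle Hb'). }
    pose proof (pop_bop F HP (fun _ => x') (fun _ => x)) as E. simpl in E.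
    assert (E2 : (fun i : {b | P b} => bop F (proj1_sig i) x' x) = (fun _ => x))
      by (apply functional_extensionality; exact Hall).
    rewrite E2, !(pop_const F HP) in E. exact E.
  - intros w Hw y. apply le_antisym.
    + apply le_trans with (meet (xhat F y y) (w y)).
      { rewrite xhat_self. apply meet_glb; [apply top_max|apply le_refl]. }
      apply join_ub. eauto.
    + apply join_least. intros s [x ->]. apply meet_xhat_le. intros c Hc.
      apply le_trans with (w (bop F c x y)).
      { rewrite (proj1 Hw). apply j2_ub1. }
      unfold equivb in Hc. rewrite Hc. apply le_refl.
Qed.
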